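(* A continuous function $f:[0,1]\to\mathbb{R}$ is of bounded variation if and only if $f=g+h$ for some continuous functions $g,h:[0,1]\to\mathbb{R}$ whose graphs are $1$-monotone.
   Context: A metric space $(X,d)$ is $c$-monotone ($c>0$) if there is a linear order $<$ on $X$ such that $d(x,y)\le c\,d(x,z)$ whenever $x<y<z$ in $X$. The graph of $g$ is $\{(x,g(x)):x\in[0,1]\}\subseteq\mathbb{R}^2$ with the Euclidean metric. *)

(* Defs.v *)
From Stdlib Require Import Reals Lra List.
Open Scope R_scope.

Definition cont_on_01 (f : R -> R) : Prop :=
  forall x, 0 <= x <= 1 -> forall eps, 0 < eps ->
    exists delta, 0 < delta /\
      forall y, 0 <= y <= 1 -> Rabs (y - x) < delta -> Rabs (f y - f x) < eps.

Fixpoint variation_along (f : R -> R) (x0 : R) (l : list R) : R :=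
  match l with
  | nil => 0
  | x1 :: l' => Rabs (f x1 - f x0) + variation_along f x1 l'
  end.

(* A partition 0 = x0 < x1 < ... < xn = 1, given as x0 = 0 and the list [x1;...;xn]. *)
Fixpoint incr_from (x0 : R) (l : list R) : Prop :=
  match l with
  | nil => True
  | x1 :: l' => x0 < x1 /\ incr_from x1 l'
  end.

Definition partition01 (l : list R) : Prop :=
  incr_from 0 l /\ last l 0 = 1.

Definition bounded_variation_01 (f : R -> R) : Prop :=
  exists M, forall l, partition01 l -> variation_along f 0 l <= M.

Definition dist2 (p q : R * R) : R :=
  sqrt ((fst p - fst q) ^ 2 + (snd p - snd q) ^ 2).

Definition strict_linear_order_on {T : Type} (S : T -> Prop) (lt : T -> T -> Prop) : Prop :=
  (forall x, S x -> ~ lt x x) /\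
  (forall x y z, S x -> S y -> S z -> lt x y -> lt y z -> lt x z) /\
  (forall x y, S x -> S y -> x <> y -> lt x y \/ lt y x).

Definition c_monotone (c : R) (S : R * R -> Prop) : Prop :=
  exists lt : R * R -> R * R -> Prop,
    strict_linear_order_on S lt /\
    forall x y z, S x -> S y -> S z -> lt x y -> lt y z ->
      dist2 x y <= c * dist2 x z.

Definition graph01 (g : R -> R) : R * R -> Prop :=
  fun p => 0 <= fst p <= 1 /\ snd p = g (fst p).

(* Main.v *)
Require Import Defs.
From Stdlib Require Import Reals Lra Psatz List Classical ClassicalEpsilon.
Open Scope R_scope.

Lemma last_default : forall (l : list R) a d1 d2, last (a :: l) d1 = last (a :: l) d2.
Proof. induction l as [|b l IH]; intros. reflexivity. apply (IH b d1 d2). Qed.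

Lemma last_cons : forall x (l : list R) d, last (x :: l) d = last l x.
Proof. intros x l d. destruct l as [|a l]; simpl; auto.
  apply last_default. Qed.

Lemma incr_bounds : forall l c, incr_from c l ->
  c <= last l c /\ forall t, In t l -> c < t /\ t <= last l c.
Proof.
  induction l as [|n l IH]; intros c H.
  - simpl. split; [lra| tauto].
  - simpl in H. destruct H as [H1 H2]. destruct (IH n H2) as [A B].
    rewrite last_cons. split; [lra|].
    intros t Ht'. destruct Ht' as [<-|Ht]; [lra|]. destruct (B t Ht); lra.
Qed.

Lemma step_ineq (xc yc xn yn xw yw xv yv : R) :
  xc < xn -> xw <= xc -> xv <= xc ->
  (xc-xw)^2 + (yc-yw)^2 <= (xn-xw)^2 + (yn-yw)^2 ->
  (xc-xv)^2 + (yc-yv)^2 <= (xn-xv)^2 + (yn-yv)^2 ->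
  Rabs (yn - yc) <= (xn - xc) + 2*(Rmax (yw+xw) (yn+xn) - (yw+xw))
                     + 2*((yv - xv) - Rmin (yv-xv) (yn-xn)).
Proof.
  intros Hx Hw Hv Dw Dv.
  assert (M1 : Rmax (yw+xw) (yn+xn) >= yw + xw) by (apply Rle_ge, Rmax_l).
  assert (M2 : Rmax (yw+xw) (yn+xn) >= yn + xn) by (apply Rle_ge, Rmax_r).
  assert (N1 : Rmin (yv-xv) (yn-xn) <= yv - xv) by apply Rmin_l.
  assert (N2 : Rmin (yv-xv) (yn-xn) <= yn - xn) by apply Rmin_r.
  destruct (Rle_dec yc yn) as [Hup|Hdn].
  - rewrite Rabs_right by lra.
    destruct (Rle_dec (yc+yn+xc+xn) (2*(yw+xw))) as [Hc|Hc].
    + assert (yn - yc <= xn - xc).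
      { destruct (Rle_dec (yn - yc) (xn - xc)) as [h|h]; [exact h|].
        exfalso.
        assert (E: (yn-yc)*(2*yw - yc - yn) <= (xn-xc)*(xn+xc-2*xw)) by nra.
        nra. }
      lra.
    + lra.
  - rewrite Rabs_left by lra.
    destruct (Rle_dec (2*(yv-xv)) (yc+yn-xc-xn)) as [Hc|Hc].
    + assert (yc - yn <= xn - xc).
      { destruct (Rle_dec (yc - yn) (xn - xc)) as [h|h]; [exact h|].
        exfalso.
        assert (E: (yc-yn)*(yc + yn - 2*yv) <= (xn-xc)*(xn+xc-2*xv)) by nra.
        nra. }
      lra.
    + lra.
Qed.

Definition D (g : R -> R) (q a : R) := (q - a)^2 + (g q - g a)^2.

Lemma incr_bound (g : R->R) (Ub Lb : R) :
 (forall t, 0<=t<=1 -> g t + t <= Ub) -> (forall t, 0<=t<=1 -> Lb <= g t - t) ->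
 (forall q a b, 0 <= q <= a -> a < b -> b <= 1 -> D g q a <= D g q b) ->
 forall l c w v, incr_from c l -> (forall t, In t l -> t <= 1) ->
   0 <= w <= c -> 0 <= v <= c -> c <= 1 ->
 variation_along g c l <= (last l c - c) + 2*(Ub - (g w + w)) + 2*((g v - v) - Lb).
Proof.
  intros HU HL HD. induction l as [|n l IH]; intros c w v Hi Hl Hw Hv Hc.
  - simpl. specialize (HU w ltac:(lra)). specialize (HL v ltac:(lra)). lra.
  - simpl in Hi. destruct Hi as [Hcn Hi].
    assert (Hn1 : n <= 1) by (apply Hl; simpl; auto).
    assert (Hl' : forall t, In t l -> t <= 1) by (intros t Ht; apply Hl; simpl; auto).
    rewrite last_cons. cbn [variation_along].
    pose proof (HD w c n ltac:(lra) Hcn Hn1) as Dw.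
    pose proof (HD v c n ltac:(lra) Hcn Hn1) as Dv.
    unfold D in Dw, Dv.
    pose proof (step_ineq c (g c) n (g n) w (g w) v (g v) Hcn ltac:(lra) ltac:(lra)
       ltac:(nra) ltac:(nra)) as S.
    set (w' := if Rle_dec (g w + w) (g n + n) then n else w).
    set (v' := if Rle_dec (g v - v) (g n - n) then v else n).
    assert (EW : g w' + w' = Rmax (g w + w) (g n + n)).
    { unfold w'. destruct (Rle_dec (g w + w) (g n + n)).
      - rewrite Rmax_right; auto.
      - rewrite Rmax_left; lra. }
    assert (EV : g v' - v' = Rmin (g v - v) (g n - n)).
    { unfold v'. destruct (Rle_dec (g v - v) (g n - n)).
      - rewrite Rmin_left; auto.
      - rewrite Rmin_right; lra. }
    assert (Hw' : 0 <= w' <= n). { unfold w'. destruct (Rle_dec (g w + w) (g n + n)); lra. }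
    assert (Hv' : 0 <= v' <= n). { unfold v'. destruct (Rle_dec (g v - v) (g n - n)); lra. }
    pose proof (IH n w' v' Hi Hl' Hw' Hv' Hn1) as IHn.
    lra.
Qed.

Lemma decr_bound (g : R->R) :
 (forall q a b, 0 <= a -> a < b -> b <= q -> q <= 1 -> D g q b <= D g q a) ->
 forall l c, incr_from c l -> (forall t, In t l -> t <= 1) -> 0 <= c -> c <= 1 ->
 exists w v, c <= w <= 1 /\ c <= v <= 1 /\
 variation_along g c l <= (last l c - c) + 2*((g w - w) - (g (last l c) - last l c))
                       + 2*((g (last l c) + last l c) - (g v + v)).
Proof.
  intros HD. induction l as [|n l IH]; intros c Hi Hl H0 Hc.
  - exists c, c. simpl. lra.
  - simpl in Hi. destruct Hi as [Hcn Hi].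
    assert (Hn1 : n <= 1) by (apply Hl; simpl; auto).
    assert (Hl' : forall t, In t l -> t <= 1) by (intros t Ht; apply Hl; simpl; auto).
    destruct (IH n Hi Hl' ltac:(lra) Hn1) as (w & v & Hw & Hv & IHn).
    rewrite last_cons. cbn [variation_along].
    set (e := last l n) in *.
    pose proof (HD w c n ltac:(lra) Hcn ltac:(lra) ltac:(lra)) as Dw.
    pose proof (HD v c n ltac:(lra) Hcn ltac:(lra) ltac:(lra)) as Dv.
    unfold D in Dw, Dv.
    pose proof (step_ineq (-n) (g n) (-c) (g c) (-w) (g w) (-v) (g v) ltac:(lra) ltac:(lra) ltac:(lra)
       ltac:(nra) ltac:(nra)) as S.
    exists (if Rle_dec (g w - w) (g c - c) then c else w).
    exists (if Rle_dec (g v + v) (g c + c) then v else c).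
    assert (EW : g (if Rle_dec (g w - w) (g c - c) then c else w) - (if Rle_dec (g w - w) (g c - c) then c else w) = Rmax (g w + - w) (g c + - c)).
    { destruct (Rle_dec (g w - w) (g c - c)).
      - rewrite Rmax_right; lra.
      - rewrite Rmax_left; lra. }
    assert (EV : g (if Rle_dec (g v + v) (g c + c) then v else c) + (if Rle_dec (g v + v) (g c + c) then v else c) = Rmin (g v - - v) (g c - - c)).
    { destruct (Rle_dec (g v + v) (g c + c)).
      - rewrite Rmin_left; lra.
      - rewrite Rmin_right; lra. }
    rewrite Rabs_minus_sym in S.
    split; [destruct (Rle_dec (g w - w) (g c - c)); lra|]. split; [destruct (Rle_dec (g v + v) (g c + c)); lra|].
    lra.
Qed.

Lemma exists_above (E : R -> Prop) c y : is_lub E c -> y < c -> exists x, E x /\ y < x.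
Proof.
  intros [Hub Hl] Hy. apply NNPP. intro Hn.
  assert (is_upper_bound E y).
  { intros x Ex. destruct (Rle_dec x y) as [h|h]; auto. exfalso; apply Hn. exists x; split; auto; lra. }
  specialize (Hl y H). lra.
Qed.

Lemma clopen_interval (P : R -> Prop) a b : a <= b ->
 (forall x, a <= x <= b -> P x -> exists d, 0 < d /\ forall y, a <= y <= b -> Rabs (y - x) < d -> P y) ->
 (forall x, a <= x <= b -> ~ P x -> exists d, 0 < d /\ forall y, a <= y <= b -> Rabs (y - x) < d -> ~ P y) ->
 P a -> P b.
Proof.
  intros Hab H1 H2 Pa.
  set (E := fun x => a <= x <= b /\ forall y, a <= y <= x -> P y).
  assert (Eb : bound E) by (exists b; intros x [Hx _]; lra).
  assert (Ea : exists x, E x).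
  { exists a. split; [lra|]. intros y Hy. replace y with a by lra. exact Pa. }
  destruct (completeness E Eb Ea) as [c Hc].
  assert (Hac : a <= c) by (apply (proj1 Hc); split; [lra|]; intros y Hy; replace y with a by lra; exact Pa).
  assert (Hcb : c <= b) by (apply (proj2 Hc); intros x [Hx _]; lra).
  assert (Below : forall y, a <= y < c -> P y).
  { intros y Hy. destruct (exists_above E c y Hc (proj2 Hy)) as [x [[Hx Px] Hyx]].
    apply Px; lra. }
  assert (Pc : P c).
  { apply NNPP. intro nPc. destruct (H2 c ltac:(lra) nPc) as [d [Hd Hn]].
    destruct (Req_dec c a) as [->|Hca]; [contradiction|].
    destruct (exists_above E c (c - d) Hc ltac:(lra)) as [x [[Hx Px] Hxd]].
    assert (x <= c) by (apply (proj1 Hc); split; auto).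
    apply (Hn x ltac:(lra)). apply Rabs_def1; lra. apply Px; lra. }
  destruct (Req_dec c b) as [<-|Hcb']; [exact Pc|].
  exfalso. destruct (H1 c ltac:(lra) Pc) as [d [Hd Hn]].
  set (c' := Rmin b (c + d/2)).
  assert (Ec' : E c').
  { split. unfold c'. split. apply Rmin_glb; lra. apply Rmin_l.
    intros y Hy. destruct (Rlt_dec y c) as [h|h]. apply Below; lra.
    apply Hn. split; [lra|]. unfold c' in Hy. pose proof (Rmin_l b (c+d/2)). lra.
    unfold c' in Hy. pose proof (Rmin_r b (c+d/2)). apply Rabs_def1; lra. }
  pose proof (proj1 Hc c' Ec'). unfold c' in H.
  destruct (Rmin_Rgt_l b (c + d/2) c) as [h _]. apply Rnot_le_lt. intro hh.
  unfold Rmin in H. destruct (Rle_dec b (c + d/2)); lra.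
  unfold Rmin in H. destruct (Rle_dec b (c + d/2)); lra.
Qed.
Definition pt (g : R -> R) (t : R) : R * R := (t, g t).

Lemma Dsmall g : cont_on_01 g -> forall t, 0 <= t <= 1 -> forall r, 0 < r ->
  exists d, 0 < d /\ forall s, 0 <= s <= 1 -> Rabs (s - t) < d -> D g s t < r /\ D g t s < r.
Proof.
  intros Hg t Ht r Hr.
  set (eta := Rmin 1 (r/4)).
  assert (He : 0 < eta) by (unfold eta; apply Rmin_glb_lt; lra).
  assert (He1 : eta <= 1) by apply Rmin_l.
  assert (He2 : eta <= r/4) by apply Rmin_r.
  destruct (Hg t Ht eta He) as [dg [Hdg Hc]].
  exists (Rmin dg eta). split. apply Rmin_glb_lt; lra.
  intros s Hs Hst.
  assert (H1 : Rabs (s - t) < dg) by (pose proof (Rmin_l dg eta); lra).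
  assert (H2 : Rabs (s - t) < eta) by (pose proof (Rmin_r dg eta); lra).
  pose proof (Hc s Hs H1) as H3.
  apply Rabs_def2 in H2. apply Rabs_def2 in H3.
  clearbody eta. destruct H2 as [H2a H2b]. destruct H3 as [H3a H3b].
  assert (A1 : (s - t)^2 < eta * eta) by nra.
  assert (A2 : (g s - g t)^2 < eta * eta) by nra.
  assert (A3 : eta * eta <= r/4) by nra.
  unfold D. replace ((t - s)^2) with ((s-t)^2) by ring.
  replace ((g t - g s)^2) with ((g s - g t)^2) by ring. split; lra.
Qed.

Lemma D_nonneg g q a : 0 <= D g q a.
Proof. unfold D. apply Rplus_le_le_0_compat; apply pow2_ge_0. Qed.

Lemma mono_D g (lt : R*R -> R*R -> Prop) :
  (forall x y z, graph01 g x -> graph01 g y -> graph01 g z -> lt x y -> lt y z ->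
     dist2 x y <= 1 * dist2 x z) ->
  forall q a b, 0 <= q <= 1 -> 0 <= a <= 1 -> 0 <= b <= 1 ->
  lt (pt g q) (pt g a) -> lt (pt g a) (pt g b) -> D g q a <= D g q b.
Proof.
  intros Hm q a b Hq Ha Hb H1 H2.
  assert (G : forall t, 0 <= t <= 1 -> graph01 g (pt g t)) by (intros t Ht; split; simpl; auto).
  pose proof (Hm _ _ _ (G q Hq) (G a Ha) (G b Hb) H1 H2) as H.
  unfold dist2 in H; simpl in H. rewrite Rmult_1_l in H.
  apply sqrt_le_0 in H. exact H.
  apply Rplus_le_le_0_compat; apply pow2_ge_0.
  apply Rplus_le_le_0_compat; apply pow2_ge_0.
Qed.

Lemma D_tri g s t a : D g s a >= D g t a / 2 - D g s t.
Proof.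
  unfold D.
  assert (E1 : (s - a)^2 + (s - t)^2 - (t - a)^2/2 = ((t - a) + 2*(s-t))^2/2) by field.
  assert (E2 : (g s - g a)^2 + (g s - g t)^2 - (g t - g a)^2/2 = ((g t - g a) + 2*(g s - g t))^2/2) by field.
  pose proof (pow2_ge_0 ((t - a) + 2*(s-t))). pose proof (pow2_ge_0 ((g t - g a) + 2*(g s - g t))).
  lra.
Qed.

Lemma D_pos g t a : t <> a -> 0 < D g t a.
Proof. intros H. unfold D.
  assert (0 < (t - a)^2).
  { simpl. rewrite Rmult_1_r. assert (t - a <> 0) by lra. nra. }
  pose proof (pow2_ge_0 (g t - g a)). lra. Qed.

Lemma D_refl g t : D g t t = 0.
Proof. unfold D. ring. Qed.

Section Dir.
Variable g : R -> R.
Variable lt : R*R -> R*R -> Prop.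
Hypothesis Hg : cont_on_01 g.
Hypothesis Hord : strict_linear_order_on (graph01 g) lt.
Hypothesis Hm : forall x y z, graph01 g x -> graph01 g y -> graph01 g z -> lt x y -> lt y z ->
     dist2 x y <= 1 * dist2 x z.

Lemma G_pt t : 0 <= t <= 1 -> graph01 g (pt g t).
Proof. intros Ht; split; simpl; auto. Qed.

Lemma asym_pt s t : 0 <= s <= 1 -> 0 <= t <= 1 -> lt (pt g s) (pt g t) -> lt (pt g t) (pt g s) -> False.
Proof. intros Hs Ht H1 H2. destruct Hord as [Hirr [Htr _]].
  apply (Hirr (pt g s) (G_pt s Hs)). exact (Htr _ _ _ (G_pt s Hs) (G_pt t Ht) (G_pt s Hs) H1 H2). Qed.

Lemma lin_pt s t : 0 <= s <= 1 -> 0 <= t <= 1 -> s <> t -> lt (pt g s) (pt g t) \/ lt (pt g t) (pt g s).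
Proof. intros Hs Ht Hst. destruct Hord as [_ [_ Hl]]. apply Hl; try apply G_pt; auto.
  intro E. apply Hst. unfold pt in E. injection E; auto. Qed.

Lemma sideopen1 t a : 0 <= t <= 1 -> 0 <= a <= 1 -> t <> a -> lt (pt g t) (pt g a) ->
  exists d, 0 < d /\ forall s, 0 <= s <= 1 -> Rabs (s - t) < d -> s <> a -> lt (pt g s) (pt g a).
Proof.
  intros Ht Ha Hta H. destruct (Dsmall g Hg t Ht (D g t a) (D_pos g t a Hta)) as [d [Hd Hs]].
  exists d; split; auto. intros s Hs1 Hs2 Hsa.
  destruct (classic (lt (pt g s) (pt g a))) as [h|h]; auto.
  destruct (lin_pt s a Hs1 Ha Hsa) as [h'|h']; [contradiction|].
  pose proof (mono_D g lt Hm t a s Ht Ha Hs1 H h').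
  destruct (Hs s Hs1 Hs2). lra.
Qed.

Lemma sideopen2 t a : 0 <= t <= 1 -> 0 <= a <= 1 -> t <> a -> lt (pt g a) (pt g t) ->
  exists d, 0 < d /\ forall s, 0 <= s <= 1 -> Rabs (s - t) < d -> s <> a -> lt (pt g a) (pt g s).
Proof.
  intros Ht Ha Hta H. pose proof (D_pos g t a Hta) as Hr.
  destruct (Dsmall g Hg t Ht (D g t a / 4) ltac:(lra)) as [d [Hd Hs]].
  exists d; split; auto. intros s Hs1 Hs2 Hsa.
  destruct (classic (lt (pt g a) (pt g s))) as [h|h]; auto.
  destruct (lin_pt s a Hs1 Ha Hsa) as [h'|h']; [|contradiction].
  pose proof (mono_D g lt Hm s a t Hs1 Ha Ht h' H).
  pose proof (D_tri g s t a).
  destruct (Hs s Hs1 Hs2). lra.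
Qed.

Lemma uniform_side a s1 s2 : 0 <= a <= 1 -> 0 <= s1 -> s1 <= s2 -> s2 <= 1 -> (a < s1 \/ s2 < a) ->
  (lt (pt g s1) (pt g a) <-> lt (pt g s2) (pt g a)).
Proof.
  intros Ha H1 H12 H2 Hside.
  assert (Hne : forall y, s1 <= y <= s2 -> y <> a) by (intros y Hy; lra).
  assert (Open1 : forall x, s1 <= x <= s2 -> lt (pt g x) (pt g a) ->
     exists d, 0 < d /\ forall y, s1 <= y <= s2 -> Rabs (y - x) < d -> lt (pt g y) (pt g a)).
  { intros x Hx Px. destruct (sideopen1 x a ltac:(lra) Ha (Hne x Hx) Px) as [d [Hd Hy]].
    exists d; split; auto. intros y Hy1 Hy2. apply Hy; auto. lra. }
  assert (Open2 : forall x, s1 <= x <= s2 -> ~ lt (pt g x) (pt g a) ->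
     exists d, 0 < d /\ forall y, s1 <= y <= s2 -> Rabs (y - x) < d -> ~ lt (pt g y) (pt g a)).
  { intros x Hx Px.
    destruct (lin_pt x a ltac:(lra) Ha (Hne x Hx)) as [h|h]; [contradiction|].
    destruct (sideopen2 x a ltac:(lra) Ha (Hne x Hx) h) as [d [Hd Hy]].
    exists d; split; auto. intros y Hy1 Hy2 Hl.
    apply (asym_pt y a ltac:(lra) Ha Hl). apply Hy; auto; lra. }
  split.
  - apply (clopen_interval (fun x => lt (pt g x) (pt g a)) s1 s2 H12); auto.
  - intro P2. apply NNPP. intro nP1.
    assert (~ lt (pt g s2) (pt g a)).
    { apply (clopen_interval (fun x => ~ lt (pt g x) (pt g a)) s1 s2 H12); auto.
      intros x Hx nnP. apply NNPP in nnP. destruct (Open1 x Hx nnP) as [d [Hd Hy]].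
      exists d; split; auto. }
    contradiction.
Qed.

Lemma order_dir :
  (forall s t, 0 <= s -> s < t -> t <= 1 -> lt (pt g s) (pt g t)) \/
  (forall s t, 0 <= s -> s < t -> t <= 1 -> lt (pt g t) (pt g s)).
Proof.
  assert (H01 : 0 <= 0 <= 1) by lra. assert (H11 : 0 <= 1 <= 1) by lra.
  destruct (lin_pt 0 1 H01 H11 ltac:(lra)) as [h|h].
  - left.
    assert (A : forall t, 0 < t -> t <= 1 -> lt (pt g 0) (pt g t)).
    { intros t Ht0 Ht1. destruct (lin_pt 0 t H01 ltac:(lra) ltac:(lra)) as [k|k]; auto.
      exfalso. assert (lt (pt g 1) (pt g 0)).
      { apply (uniform_side 0 t 1 H01 ltac:(lra) Ht1 ltac:(lra) ltac:(lra)); auto. }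
      apply (asym_pt 0 1 H01 H11 h H). }
    intros s t Hs Hst Ht. destruct (Req_dec s 0) as [->|Hs0]; [apply A; lra|].
    apply (uniform_side t 0 s ltac:(lra) ltac:(lra) ltac:(lra) ltac:(lra) ltac:(lra)).
    apply A; lra.
  - right.
    assert (A : forall t, 0 < t -> t <= 1 -> lt (pt g t) (pt g 0)).
    { intros t Ht0 Ht1.
      apply (uniform_side 0 t 1 H01 ltac:(lra) Ht1 ltac:(lra) ltac:(lra)); auto. }
    intros s t Hs Hst Ht. destruct (Req_dec s 0) as [->|Hs0]; [apply A; lra|].
    destruct (lin_pt s t ltac:(lra) ltac:(lra) ltac:(lra)) as [k|k]; auto.
    exfalso.
    assert (lt (pt g 0) (pt g t)).
    { apply (uniform_side t 0 s ltac:(lra) ltac:(lra) ltac:(lra) ltac:(lra) ltac:(lra)); auto. }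
    apply (asym_pt 0 t H01 ltac:(lra) H (A t ltac:(lra) Ht)).
Qed.

End Dir.

Definition clamp (x : R) := Rmax 0 (Rmin 1 x).

Lemma clamp_prop x : 0 <= clamp x <= 1.
Proof. unfold clamp, Rmax, Rmin. destruct (Rle_dec 1 x); repeat match goal with |- context[Rle_dec ?a ?b] => destruct (Rle_dec a b) end; lra. Qed.

Lemma clamp_id x : 0 <= x <= 1 -> clamp x = x.
Proof. intros H. unfold clamp, Rmax, Rmin. destruct (Rle_dec 1 x); repeat match goal with |- context[Rle_dec ?a ?b] => destruct (Rle_dec a b) end; lra. Qed.

Lemma clamp_dist x c : 0 <= c <= 1 -> Rabs (clamp x - c) <= Rabs (x - c).
Proof. intros H. unfold clamp, Rmax, Rmin.
  destruct (Rle_dec 1 x); repeat match goal with |- context[Rle_dec ?a ?b] => destruct (Rle_dec a b) end;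
  repeat match goal with |- context [Rabs ?z] => destruct (Rcase_abs z) as [?|?]; [rewrite (Rabs_left z) by lra | rewrite (Rabs_right z) by lra] end; lra.
Qed.

Lemma bounded01 g : cont_on_01 g -> exists B, forall t, 0 <= t <= 1 -> Rabs (g t) <= B.
Proof.
  intros Hg.
  set (h := fun x => g (clamp x)).
  assert (Hc : forall c, 0 <= c <= 1 -> continuity_pt h c).
  { intros c Hc. unfold continuity_pt, continue_in, limit1_in, limit_in.
    intros eps He. destruct (Hg c Hc eps He) as [d [Hd Hy]].
    exists d. split; [lra|]. intros x [_ Hx]. simpl in *. unfold R_dist in *.
    unfold h. rewrite (clamp_id c Hc). apply Hy. apply clamp_prop.
    pose proof (clamp_dist x c Hc). lra. }
  destruct (continuity_ab_maj h 0 1 ltac:(lra) Hc) as [Mx [HM _]].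
  destruct (continuity_ab_min h 0 1 ltac:(lra) Hc) as [mx [Hmn _]].
  exists (Rabs (h Mx) + Rabs (h mx)). intros t Ht.
  specialize (HM t Ht). specialize (Hmn t Ht). unfold h in *. rewrite (clamp_id t Ht) in *.
  unfold Rabs. repeat destruct (Rcase_abs _); lra.
Qed.

Lemma part_le1 l : incr_from 0 l -> last l 0 = 1 -> forall t, In t l -> 0 < t <= 1.
Proof. intros Hi Hl t Ht. destruct (incr_bounds l 0 Hi) as [_ B]. destruct (B t Ht). lra. Qed.

Lemma c_mono_BV g : cont_on_01 g -> c_monotone 1 (graph01 g) -> bounded_variation_01 g.
Proof.
  intros Hg [lt [Hord Hm]].
  destruct (bounded01 g Hg) as [B HB].
  exists (8 * B + 5). intros l [Hi Hl].
  assert (Hl1 : forall t, In t l -> t <= 1) by (intros t Ht; destruct (part_le1 l Hi Hl t Ht); lra).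
  assert (HB' : forall t, 0 <= t <= 1 -> -B <= g t <= B) by (intros t Ht; specialize (HB t Ht); apply Rabs_le_between in HB || (unfold Rabs in HB; destruct (Rcase_abs (g t)); lra); lra).
  destruct (order_dir g lt Hg Hord Hm) as [Inc|Dec].
  - assert (HD : forall q a b, 0 <= q <= a -> a < b -> b <= 1 -> D g q a <= D g q b).
    { intros q a b Hqa Hab Hb. destruct (Req_dec q a) as [->|Hq].
      - rewrite D_refl. apply D_nonneg.
      - apply (mono_D g lt Hm); try lra; apply Inc; lra. }
    pose proof (incr_bound g (B + 1) (-B - 1) ltac:(intros t Ht; specialize (HB' t Ht); lra)
       ltac:(intros t Ht; specialize (HB' t Ht); lra) HD l 0 0 0 Hi Hl1 ltac:(lra) ltac:(lra) ltac:(lra)) as H.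
    rewrite Hl in H. pose proof (HB' 0 ltac:(lra)). lra.
  - assert (HD : forall q a b, 0 <= a -> a < b -> b <= q -> q <= 1 -> D g q b <= D g q a).
    { intros q a b Ha Hab Hbq Hq. destruct (Req_dec q b) as [->|Hq'].
      - rewrite D_refl. apply D_nonneg.
      - apply (mono_D g lt Hm); try lra; apply Dec; lra. }
    destruct (decr_bound g HD l 0 Hi Hl1 ltac:(lra) ltac:(lra)) as (w & v & Hw & Hv & H).
    rewrite Hl in H. pose proof (HB' 1 ltac:(lra)). pose proof (HB' w ltac:(lra)). pose proof (HB' v ltac:(lra)). lra.
Qed.

Definition part (a b : R) (l : list R) := incr_from a l /\ last l a = b.

Lemma var_app f : forall l1 l2 a,
  variation_along f a (l1 ++ l2) = variation_along f a l1 + variation_along f (last l1 a) l2.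
Proof.
  induction l1 as [|n l1 IH]; intros l2 a.
  - simpl. ring.
  - rewrite <- app_comm_cons. cbn [variation_along]. rewrite IH, last_cons. ring.
Qed.

Lemma last_app : forall (l1 l2 : list R) a, last (l1 ++ l2) a = last l2 (last l1 a).
Proof.
  induction l1 as [|n l1 IH]; intros l2 a.
  - reflexivity.
  - rewrite <- app_comm_cons, !last_cons. apply IH.
Qed.

Lemma incr_app : forall l1 l2 a, incr_from a l1 -> incr_from (last l1 a) l2 -> incr_from a (l1 ++ l2).
Proof.
  induction l1 as [|n l1 IH]; intros l2 a H1 H2.
  - exact H2.
  - rewrite <- app_comm_cons. simpl in H1. destruct H1 as [H1 H1'].
    split; auto. apply IH; auto. rewrite last_cons in H2. exact H2.
Qed.

Lemma incr_snoc : forall l a y, incr_from a (l ++ y :: nil) -> last l a < y.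
Proof.
  induction l as [|n l IH]; intros a y H.
  - simpl in H. simpl. tauto.
  - rewrite <- app_comm_cons in H. simpl in H. destruct H as [_ H]. rewrite last_cons. apply IH; auto.
Qed.

Lemma part_app f a b c l1 l2 : part a b l1 -> part b c l2 ->
  part a c (l1 ++ l2) /\ variation_along f a (l1 ++ l2) = variation_along f a l1 + variation_along f b l2.
Proof.
  intros [H1 E1] [H2 E2]. split; [split|].
  - apply incr_app; auto. rewrite E1; auto.
  - rewrite last_app, E1; auto.
  - rewrite var_app, E1; auto.
Qed.

Lemma part_split f : forall l a b c, part a c l -> a <= b -> b <= c ->
  exists l1 l2, part a b l1 /\ part b c l2 /\
    variation_along f a l <= variation_along f a l1 + variation_along f b l2.
Proof.
  induction l as [|n l IH]; intros a b c [Hi Hl] Hab Hbc.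
  - simpl in Hl. exists nil, nil. split; [split; simpl; auto; lra|]. split; [split; simpl; auto; lra|].
    simpl; lra.
  - simpl in Hi. destruct Hi as [Han Hi]. rewrite last_cons in Hl.
    destruct (Rlt_dec n b) as [Hnb|Hnb].
    + destruct (IH n b c (conj Hi Hl) ltac:(lra) Hbc) as (l1 & l2 & [P1a P1b] & P2 & Hv).
      exists (n :: l1), l2. split; [split|]; auto.
      * simpl; auto.
      * rewrite last_cons; auto.
      * split; auto. cbn [variation_along]. lra.
    + destruct (Req_dec n b) as [Enb|Enb].
      * subst n. exists (b :: nil), l. split; [split; simpl; auto; lra|]. split; [split; auto|].
        cbn [variation_along]. lra.
      * destruct (Req_dec a b) as [Eab|Eab].
        -- subst b. exists nil, (n :: l). split; [split; simpl; auto|].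
           split; [split; [simpl; auto| rewrite last_cons; auto]|]. simpl. lra.
        -- exists (b :: nil), (n :: l). split; [split; simpl; auto; lra|].
           split; [split; [simpl; split; auto; lra| rewrite last_cons; auto]|].
           cbn [variation_along].
           pose proof (Rabs_triang (f b - f a) (f n - f b)).
           replace (f b - f a + (f n - f b)) with (f n - f a) in H by ring. lra.
Qed.

Lemma var_sum f g h : forall l x0, f x0 = g x0 + h x0 -> (forall t, In t l -> f t = g t + h t) ->
  variation_along f x0 l <= variation_along g x0 l + variation_along h x0 l.
Proof.
  induction l as [|n l IH]; intros x0 H0 Hl.
  - simpl; lra.
  - cbn [variation_along].
    assert (Hn : f n = g n + h n) by (apply Hl; simpl; auto).
    pose proof (IH n Hn (fun t Ht => Hl t (or_intror Ht))).
    pose proof (Rabs_triang (g n - g x0) (h n - h x0)).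
    replace (g n - g x0 + (h n - h x0)) with (f n - f x0) in H1 by (rewrite Hn, H0; ring).
    lra.
Qed.

Lemma monotone_cmono g :
  (forall s t, 0 <= s -> s <= t -> t <= 1 -> g s <= g t) \/
  (forall s t, 0 <= s -> s <= t -> t <= 1 -> g t <= g s) ->
  c_monotone 1 (graph01 g).
Proof.
  intros Hmon. exists (fun p q => fst p < fst q). split.
  - split; [intros x _; lra|]. split; [intros x y z _ _ _; lra|].
    intros x y [Hx Ex] [Hy Ey] Hxy. destruct (Rtotal_order (fst x) (fst y)) as [h|[h|h]]; auto.
    exfalso. apply Hxy. destruct x as [x1 x2], y as [y1 y2]. simpl in *. subst. reflexivity.
  - intros [x1 x2] [y1 y2] [z1 z2] [Hx Ex] [Hy Ey] [Hz Ez] H1 H2. simpl in *. subst.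
    unfold dist2; simpl. rewrite Rmult_1_l. apply sqrt_le_1_alt.
    destruct Hmon as [M|M].
    + pose proof (M x1 y1 ltac:(lra) ltac:(lra) ltac:(lra)). pose proof (M y1 z1 ltac:(lra) ltac:(lra) ltac:(lra)). nra.
    + pose proof (M x1 y1 ltac:(lra) ltac:(lra) ltac:(lra)). pose proof (M y1 z1 ltac:(lra) ltac:(lra) ltac:(lra)). nra.
Qed.

Lemma incr_prefix : forall l1 l2 a, incr_from a (l1 ++ l2) -> incr_from a l1.
Proof.
  induction l1 as [|n l1 IH]; intros l2 a H.
  - simpl; auto.
  - rewrite <- app_comm_cons in H. simpl in H |- *. destruct H as [H1 H2]. split; auto. eapply IH; eauto.
Qed.

Definition Sup (E : R -> Prop) : R := epsilon (inhabits 0) (is_lub E).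
Definition VE (f : R -> R) (x v : R) : Prop := exists l, part 0 x l /\ v = variation_along f 0 l.
Definition V (f : R -> R) (x : R) : R := Sup (VE f x).

Section Jordan.
Variable f : R -> R.
Variable M : R.
Hypothesis Hf : cont_on_01 f.
Hypothesis HM : forall l, partition01 l -> variation_along f 0 l <= M.

Lemma VE_bound x : 0 <= x <= 1 -> forall l, part 0 x l -> variation_along f 0 l <= M.
Proof.
  intros Hx l Hl. destruct (Req_dec x 1) as [->|Hx1].
  - apply HM. exact Hl.
  - assert (P1 : part x 1 (1 :: nil)) by (split; simpl; auto; lra).
    destruct (part_app f 0 x 1 l (1 :: nil) Hl P1) as [Pa Va].
    pose proof (HM _ Pa). rewrite Va in H. simpl in H. pose proof (Rabs_pos (f 1 - f x)). lra.
Qed.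

Lemma V_lub x : 0 <= x <= 1 -> is_lub (VE f x) (V f x).
Proof.
  intros Hx. unfold V, Sup. apply epsilon_spec.
  destruct (completeness (VE f x)) as [m Hm].
  - exists M. intros v [l [Hl ->]]. apply (VE_bound x Hx l Hl).
  - destruct (Req_dec x 0) as [->|Hx0].
    + exists 0. exists nil. split; [split; simpl; auto|]. reflexivity.
    + exists (Rabs (f x - f 0) + 0). exists (x :: nil). split; [split; simpl; auto; lra|]. reflexivity.
  - exists m; exact Hm.
Qed.

Lemma V_ub x l : 0 <= x <= 1 -> part 0 x l -> variation_along f 0 l <= V f x.
Proof. intros Hx Hl. apply (proj1 (V_lub x Hx)). exists l; auto. Qed.

Lemma V_least x K : 0 <= x <= 1 -> (forall l, part 0 x l -> variation_along f 0 l <= K) -> V f x <= K.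
Proof. intros Hx H. apply (proj2 (V_lub x Hx)). intros v [l [Hl ->]]. auto. Qed.

Lemma V_approx x e : 0 <= x <= 1 -> 0 < e -> exists l, part 0 x l /\ V f x - e < variation_along f 0 l.
Proof.
  intros Hx He. apply NNPP. intro Hn.
  assert (V f x <= V f x - e).
  { apply V_least; auto. intros l Hl. destruct (Rle_dec (variation_along f 0 l) (V f x - e)) as [h|h]; auto.
    exfalso. apply Hn. exists l. split; auto. lra. }
  lra.
Qed.

Lemma V_mon x y : 0 <= x -> x < y -> y <= 1 -> V f x + Rabs (f y - f x) <= V f y.
Proof.
  intros Hx Hxy Hy.
  assert (V f x <= V f y - Rabs (f y - f x)); [|lra].
  apply V_least; [lra|]. intros l Hl.
  assert (P1 : part x y (y :: nil)) by (split; simpl; auto; lra).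
  destruct (part_app f 0 x y l (y :: nil) Hl P1) as [Pa Va].
  pose proof (V_ub y _ ltac:(lra) Pa). rewrite Va in H. simpl in H. lra.
Qed.

Lemma local_small x e : 0 <= x <= 1 -> 0 < e -> exists d, 0 < d /\
  forall a b, 0 <= a -> a <= x -> x <= b -> b <= 1 -> x - d < a -> b < x + d ->
  forall q, part a b q -> variation_along f a q <= 3 * e.
Proof.
  intros Hx He.
  destruct (V_approx 1 e ltac:(lra) He) as [ls [Hls Hvs]].
  destruct (part_split f ls 0 x 1 Hls ltac:(lra) ltac:(lra)) as (l1 & l2 & H1 & H2 & Hv12).
  destruct (Hf x Hx e He) as [df [Hdf Hcf]].
  assert (Left : exists d1, 0 < d1 /\ forall a, 0 <= a -> a <= x -> x - d1 < a ->
            exists L1, part 0 a L1 /\ variation_along f 0 l1 - e <= variation_along f 0 L1).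
  { destruct (list_eq_dec Req_EM_T l1 nil) as [E1|Hne].
    - subst l1. exists 1. split; [lra|]. intros a Ha Hax _. destruct H1 as [_ H1]. simpl in H1.
      exists nil. split; [split; simpl; auto; lra|]. simpl. lra.
    - destruct (exists_last Hne) as [l1' [z Ez]].
      destruct H1 as [Hi1 Hla1]. rewrite Ez in Hi1, Hla1 |- *.
      rewrite last_app in Hla1. simpl in Hla1. subst z.
      pose proof (incr_snoc l1' 0 x Hi1) as Hz.
      pose proof (incr_prefix l1' _ 0 Hi1) as Hi1'.
      exists (Rmin (x - last l1' 0) df). split; [apply Rmin_glb_lt; lra|].
      intros a Ha Hax Hda.
      pose proof (Rmin_l (x - last l1' 0) df). pose proof (Rmin_r (x - last l1' 0) df).
      exists (l1' ++ a :: nil). split.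
      + split. apply incr_app; auto. simpl; split; auto; lra.
        rewrite last_app. reflexivity.
      + rewrite !var_app. cbn [variation_along].
        assert (Hfa : Rabs (f a - f x) < e) by (apply Hcf; [lra|]; rewrite Rabs_left1 by lra; lra).
        pose proof (Rabs_triang (f a - f (last l1' 0)) (f x - f a)) as T.
        replace (f a - f (last l1' 0) + (f x - f a)) with (f x - f (last l1' 0)) in T by ring.
        rewrite Rabs_minus_sym in Hfa. lra. }
  assert (Right : exists d2, 0 < d2 /\ forall b, x <= b -> b <= 1 -> b < x + d2 ->
            exists L2, part b 1 L2 /\ variation_along f x l2 - e <= variation_along f b L2).
  { destruct l2 as [|w l2'].
    - exists 1. split; [lra|]. intros b Hxb Hb1 _. destruct H2 as [_ H2]. simpl in H2.
      exists nil. split; [split; simpl; auto; lra|]. simpl. lra.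
    - destruct H2 as [Hi2 Hla2]. simpl in Hi2. destruct Hi2 as [Hxw Hi2]. rewrite last_cons in Hla2.
      exists (Rmin (w - x) df). split; [apply Rmin_glb_lt; lra|].
      intros b Hxb Hb1 Hdb.
      pose proof (Rmin_l (w - x) df). pose proof (Rmin_r (w - x) df).
      exists (w :: l2'). split.
      + split. simpl; split; auto; lra. rewrite last_cons; auto.
      + cbn [variation_along].
        assert (Hfb : Rabs (f b - f x) < e) by (apply Hcf; [lra|]; rewrite Rabs_right by lra; lra).
        pose proof (Rabs_triang (f w - f b) (f b - f x)) as T.
        replace (f w - f b + (f b - f x)) with (f w - f x) in T by ring.
        lra. }
  destruct Left as [d1 [Hd1 HL]]. destruct Right as [d2 [Hd2 HR]].
  exists (Rmin d1 d2). split; [apply Rmin_glb_lt; lra|].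
  intros a b Ha Hax Hxb Hb Hda Hdb q Hq.
  pose proof (Rmin_l d1 d2). pose proof (Rmin_r d1 d2).
  destruct (HL a Ha Hax ltac:(lra)) as [L1 [PL1 VL1]].
  destruct (HR b Hxb Hb ltac:(lra)) as [L2 [PL2 VL2]].
  destruct (part_app f 0 a b L1 q PL1 Hq) as [P3 V3].
  destruct (part_app f 0 b 1 (L1 ++ q) L2 P3 PL2) as [P4 V4].
  pose proof (V_ub 1 _ ltac:(lra) P4). lra.
Qed.

Lemma V_cont : cont_on_01 (V f).
Proof.
  intros x Hx e He.
  destruct (local_small x (e/6) Hx ltac:(lra)) as [d [Hd Hs]].
  exists d. split; auto. intros y Hy Hyx.
  apply Rabs_def2 in Hyx || (pose proof (Rabs_def2 _ _ Hyx)).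
  destruct (Rle_dec x y) as [Hxy|Hxy].
  - assert (A : V f x <= V f y).
    { destruct (Req_dec x y) as [->|Hne]; [lra|]. pose proof (V_mon x y ltac:(lra) ltac:(lra) ltac:(lra)).
      pose proof (Rabs_pos (f y - f x)). lra. }
    assert (B : V f y <= V f x + e/2).
    { apply V_least; [lra|]. intros q Hq.
      destruct (part_split f q 0 x y Hq ltac:(lra) Hxy) as (q1 & q2 & Q1 & Q2 & Hv).
      pose proof (V_ub x q1 Hx Q1). pose proof (Hs x y ltac:(lra) ltac:(lra) ltac:(lra) ltac:(lra) ltac:(lra) ltac:(lra) q2 Q2).
      lra. }
    apply Rabs_def1; lra.
  - assert (A : V f y <= V f x).
    { pose proof (V_mon y x ltac:(lra) ltac:(lra) ltac:(lra)). pose proof (Rabs_pos (f x - f y)). lra. }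
    assert (B : V f x <= V f y + e/2).
    { apply V_least; [lra|]. intros q Hq.
      destruct (part_split f q 0 y x Hq ltac:(lra) ltac:(lra)) as (q1 & q2 & Q1 & Q2 & Hv).
      pose proof (V_ub y q1 ltac:(lra) Q1). pose proof (Hs y x ltac:(lra) ltac:(lra) ltac:(lra) ltac:(lra) ltac:(lra) ltac:(lra) q2 Q2).
      lra. }
    apply Rabs_def1; lra.
Qed.

End Jordan.

Lemma cont_diff f g : cont_on_01 f -> cont_on_01 g -> cont_on_01 (fun t => f t - g t).
Proof.
  intros Hf Hg x Hx e He.
  destruct (Hf x Hx (e/2) ltac:(lra)) as [d1 [Hd1 H1]].
  destruct (Hg x Hx (e/2) ltac:(lra)) as [d2 [Hd2 H2]].
  exists (Rmin d1 d2). split; [apply Rmin_glb_lt; lra|].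
  intros y Hy Hyx. pose proof (Rmin_l d1 d2). pose proof (Rmin_r d1 d2).
  specialize (H1 y Hy ltac:(lra)). specialize (H2 y Hy ltac:(lra)).
  pose proof (Rabs_triang (f y - f x) (-(g y - g x))). rewrite Rabs_Ropp in H3.
  replace (f y - f x + - (g y - g x)) with (f y - g y - (f x - g x)) in H3 by ring. lra.
Qed.

Theorem corollary6p6 (f : R -> R) :
  cont_on_01 f ->
  (bounded_variation_01 f <->
   exists g h : R -> R,
     cont_on_01 g /\ cont_on_01 h /\
     (forall x, 0 <= x <= 1 -> f x = g x + h x) /\
     c_monotone 1 (graph01 g) /\ c_monotone 1 (graph01 h)).
Proof.
  intros Hf. split.
  - intros [M HM].
    assert (Vc : cont_on_01 (V f)) by (eapply V_cont; eauto).
    assert (Vm : forall s t, 0 <= s -> s < t -> t <= 1 -> V f s + Rabs (f t - f s) <= V f t)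
      by (intros; eapply V_mon; eauto).
    exists (V f), (fun t => f t - V f t). split; [exact Vc|]. split; [apply cont_diff; auto|].
    split; [intros; ring|]. split.
    + apply monotone_cmono. left. intros s t Hs Hst Ht.
      destruct (Req_dec s t) as [->|Hne]; [lra|].
      pose proof (Vm s t Hs ltac:(lra) Ht). pose proof (Rabs_pos (f t - f s)). lra.
    + apply monotone_cmono. right. intros s t Hs Hst Ht.
      destruct (Req_dec s t) as [->|Hne]; [lra|].
      pose proof (Vm s t Hs ltac:(lra) Ht). pose proof (Rle_abs (f t - f s)). lra.
  - intros (g & h & Hg & Hh & Hfgh & Mg & Mh).
    destruct (c_mono_BV g Hg Mg) as [Bg HBg].
    destruct (c_mono_BV h Hh Mh) as [Bh HBh].
    exists (Bg + Bh). intros l Hl.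
    pose proof (HBg l Hl). pose proof (HBh l Hl).
    destruct Hl as [Hi Hla].
    pose proof (var_sum f g h l 0 (Hfgh 0 ltac:(lra))
      (fun t Ht => Hfgh t ltac:(pose proof (part_le1 l Hi Hla t Ht); lra))).
    lra.
Qed.
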